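(* Consider the ride-hailing model in the context. If $(\bm x^A,\bm w^A,\bm x^C,\bm w^C)$ is a mixed-fleet equilibrium and $\bm b^C_e=(\sum_{j=1}^L x^C_{ji})_{i=1}^L$, then $\bm x^C$ is an optimal solution of $\mathcal{CV}(\bm b^C_e)$ and $\bm w^C$ is a vector of Lagrange multipliers of its capacity constraints.
   Context: Model. There are $L$ regions $\{1,\dots,L\}$. For regions $i,j$, $b_{ij}\ge0$ is the customer rate from $i$ to $j$; $b_i=\sum_j b_{ij}$ (assumed $>0$), $q_{ij}=b_{ij}/b_i$. Travel times satisfy $t_{ij}>0$ for $i\ne j$, $t_{ii}=0$. Constants: $p>0$, $c\ge0$, $R\in(0,1)$, $N>0$, $M\ge0$. For $i,\alpha$: $\tau^{dr}_{i\alpha}=t_{i\alpha}+\sum_j q_{\alpha j}t_{\alpha j}$, $r^A_{i\alpha}=p\sum_j q_{\alpha j}t_{\alpha j}-c\tau^{dr}_{i\alpha}$, $r^C_{i\alpha}=p(1-R)\sum_j q_{\alpha j}t_{\alpha j}-c\tau^{dr}_{i\alpha}$, $r^{C2P}_{i\alpha}=pR\sum_j q_{\alpha j}t_{\alpha j}$. A matrix $\bm x\in\mathbb R^{L\times L}_{\ge0}$ satisfies flow balance if $\sum_j(\sum_k x_{kj})q_{ji}=\sum_\alpha x_{i\alpha}$ for all $i$. $\mathcal{CV}(\bm b^C)$: maximize $N\log\sum_{i,\alpha}r^C_{i\alpha}x_{i\alpha}-\sum_{i,\alpha}\tau^{dr}_{i\alpha}x_{i\alpha}$ over $\bm x\ge0$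 satisfying flow balance and $\sum_j x_{ji}\le b^C_i$ for all $i$. Mixed-fleet equilibrium: a tuple $(\bm x^A,\bm w^A,\bm x^C,\bm w^C)$ with $\bm x^A,\bm x^C\in\mathbb R^{L\times L}_{\ge0}$, $\bm w^A,\bm w^C\in\mathbb R^L_{\ge0}$ such that (i) $\sum_j(x^A_{ji}+x^C_{ji})\le b_i$ for all $i$; $\bm x^A,\bm x^C$ satisfy flow balance; $\sum_{i,\alpha}(\tau^{dr}_{i\alpha}+w^A_\alpha)x^A_{i\alpha}\le M$ and $\sum_{i,\alpha}(\tau^{dr}_{i\alpha}+w^C_\alpha)x^C_{i\alpha}=N$; (ii) $\bm x^C$ maximizes $\sum_{i,\alpha}r^C_{i\alpha}x_{i\alpha}$ over all $\bm x\ge0$ satisfying flow balance and $\sum_{i,\alpha}(\tau^{dr}_{i\alpha}+w^C_\alpha)x_{i\alpha}=N$; (iii) the platform profit $\sum_{i,\alpha}r^A_{i\alpha}x^A_{i\alpha}+\sum_{i,\alpha}r^{C2P}_{i\alpha}x^C_{i\alpha}$ is maximal among all tuples satisfying (i) and (ii). *)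

(* Defs.v *)
From HB Require Import structures.
From mathcomp Require Import all_boot all_order all_algebra.
From mathcomp Require Import reals ereal exp.
Set Implicit Arguments. Unset Strict Implicit. Unset Printing Implicit Defensive.
Import Order.TTheory GRing.Theory Num.Theory.
Local Open Scope ring_scope.

Record model (R : realType) (L : nat) := Model {
  b : 'I_L -> 'I_L -> R;   (* customer rate from i to j *)
  t : 'I_L -> 'I_L -> R;   (* travel times *)
  p : R; c : R; Rc : R;     (* Rc is the commission rate R *)
  N : R; M : R }.

Section Model.
Variables (R : realType) (L : nat) (m : model R L).

Definition model_ok : Prop :=
  (forall i j, 0 <= b m i j) /\
  (forall i, 0 < \sum_(j < L) b m i j) /\
  (forall i j, i != j -> 0 < t m i j) /\
  (forall i, t m i i = 0) /\
  0 < p m /\ 0 <= c m /\ 0 < Rc m < 1 /\ 0 < N m /\ 0 <= M m.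

Definition bsum (i : 'I_L) : R := \sum_(j < L) b m i j.
Definition q (i j : 'I_L) : R := b m i j / bsum i.
Definition tbar (a : 'I_L) : R := \sum_(j < L) q a j * t m a j.
Definition tau_dr (i a : 'I_L) : R := t m i a + tbar a.
Definition rA (i a : 'I_L) : R := p m * tbar a - c m * tau_dr i a.
Definition rC (i a : 'I_L) : R := p m * (1 - Rc m) * tbar a - c m * tau_dr i a.
Definition rC2P (i a : 'I_L) : R := p m * Rc m * tbar a.

Definition lin (f x : 'I_L -> 'I_L -> R) : R :=
  \sum_(i < L) \sum_(a < L) f i a * x i a.

Definition nonneg_mx (x : 'I_L -> 'I_L -> R) : Prop := forall i j, 0 <= x i j.
Definition nonneg_vec (w : 'I_L -> R) : Prop := forall i, 0 <= w i.

Definition flow_balance (x : 'I_L -> 'I_L -> R) : Prop :=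
  forall i, \sum_(j < L) (\sum_(k < L) x k j) * q j i = \sum_(a < L) x i a.

Definition inflow (x : 'I_L -> 'I_L -> R) (i : 'I_L) : R := \sum_(j < L) x j i.

Definition tauw (w : 'I_L -> R) (i a : 'I_L) : R := tau_dr i a + w a.

(* Objective N log(sum r^C x) - sum tau^dr x, as an extended real:
   -oo outside the domain of log (sum r^C x <= 0). *)
Definition CV_obj (x : 'I_L -> 'I_L -> R) : \bar R :=
  if 0 < lin rC x then (N m * ln (lin rC x) - lin tau_dr x)%:E else -oo%E.

Definition CV_feasible (bC : 'I_L -> R) (x : 'I_L -> 'I_L -> R) : Prop :=
  nonneg_mx x /\ flow_balance x /\ (forall i, inflow x i <= bC i).

Definition CV_optimal (bC : 'I_L -> R) (x : 'I_L -> 'I_L -> R) : Prop :=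
  CV_feasible bC x /\
  forall y, CV_feasible bC y -> (CV_obj y <= CV_obj x)%E.

Definition CV_lagrangian (bC w : 'I_L -> R) (x : 'I_L -> 'I_L -> R) : \bar R :=
  (CV_obj x + (\sum_(i < L) w i * (bC i - inflow x i))%:E)%E.

(* w is a vector of Lagrange multipliers of the capacity constraints of
   CV(bC) at x: dual feasibility, complementary slackness, and x maximizes
   the Lagrangian over the remaining constraints (x >= 0, flow balance). *)
Definition capacity_multipliers (bC : 'I_L -> R) (x : 'I_L -> 'I_L -> R)
    (w : 'I_L -> R) : Prop :=
  nonneg_vec w /\
  (forall i, w i * (bC i - inflow x i) = 0) /\
  forall y, nonneg_mx y -> flow_balance y ->
    (CV_lagrangian bC w y <= CV_lagrangian bC w x)%E.

Definition eq_cond_i (xA : 'I_L -> 'I_L -> R) (wA : 'I_L -> R)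
    (xC : 'I_L -> 'I_L -> R) (wC : 'I_L -> R) : Prop :=
  [/\ nonneg_mx xA, nonneg_mx xC, nonneg_vec wA, nonneg_vec wC &
  [/\ forall i, \sum_(j < L) (xA j i + xC j i) <= bsum i,
      flow_balance xA, flow_balance xC,
      lin (tauw wA) xA <= M m &
      lin (tauw wC) xC = N m]].

Definition eq_cond_ii (xC : 'I_L -> 'I_L -> R) (wC : 'I_L -> R) : Prop :=
  forall x, nonneg_mx x -> flow_balance x -> lin (tauw wC) x = N m ->
    lin rC x <= lin rC xC.

Definition platform_profit (xA xC : 'I_L -> 'I_L -> R) : R :=
  lin rA xA + lin rC2P xC.

Definition mixed_equilibrium (xA : 'I_L -> 'I_L -> R) (wA : 'I_L -> R)
    (xC : 'I_L -> 'I_L -> R) (wC : 'I_L -> R) : Prop :=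
  [/\ eq_cond_i xA wA xC wC, eq_cond_ii xC wC &
   forall xA' wA' xC' wC', eq_cond_i xA' wA' xC' wC' -> eq_cond_ii xC' wC' ->
     platform_profit xA' xC' <= platform_profit xA xC].

End Model.

(* Main.v *)
Require Import Defs.
From mathcomp Require Import all_boot all_order all_algebra.
From mathcomp Require Import reals ereal exp.
From mathcomp Require Import lra.
Import Order.TTheory GRing.Theory Num.Theory.
Local Open Scope ring_scope.

Section Helpers.
Variables (R : realType) (L : nat) (m : model R L).
Implicit Types (x y : 'I_L -> 'I_L -> R) (w : 'I_L -> R).

Lemma lin_scale f x k : lin f (fun i j => k * x i j) = k * lin f x.
Proof.
rewrite /lin mulr_sumr; apply: eq_bigr => i _; rewrite mulr_sumr.
by apply: eq_bigr => a _; rewrite mulrCA.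
Qed.

Lemma lin_add f x y : lin f (fun i j => x i j + y i j) = lin f x + lin f y.
Proof.
rewrite /lin -big_split; apply: eq_bigr => i _; rewrite -big_split.
by apply: eq_bigr => a _; rewrite mulrDr.
Qed.

Lemma fb_scale x k : flow_balance m x -> flow_balance m (fun i j => k * x i j).
Proof.
move=> H i; rewrite -mulr_sumr -H mulr_sumr; apply: eq_bigr => j _.
by rewrite -mulr_sumr mulrA.
Qed.

Lemma fb_add x y : flow_balance m x -> flow_balance m y ->
  flow_balance m (fun i j => x i j + y i j).
Proof.
move=> Hx Hy i; rewrite big_split /= -Hx -Hy -big_split; apply: eq_bigr => j _.
by rewrite big_split mulrDl.
Qed.

Lemma lin_tauw w x :
  lin (tauw m w) x = lin (tau_dr m) x + \sum_(i < L) w i * inflow x i.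
Proof.
rewrite /lin /tauw.
have -> : \sum_(i < L) w i * inflow x i =
          \sum_(i < L) \sum_(a < L) w a * x i a.
  rewrite exchange_big; apply: eq_bigr => a _; by rewrite /inflow mulr_sumr.
rewrite -big_split; apply: eq_bigr => i _; rewrite -big_split.
by apply: eq_bigr => a _; rewrite mulrDl.
Qed.

Lemma tauw_ge0 w : model_ok m -> nonneg_vec w -> forall i a, 0 <= tauw m w i a.
Proof.
move=> [hb [hbs [ht [htt _]]]] hw i a.
have t0 : forall i j, 0 <= t m i j.
  move=> i' j'; case: (eqVneq i' j') => [<-|hne]; first by rewrite htt.
  exact: ltW (ht _ _ hne).
rewrite /tauw /tau_dr /tbar; apply: addr_ge0 => //; apply: addr_ge0 => //.
apply: sumr_ge0 => j _; apply: mulr_ge0 => //.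
rewrite /q; apply: divr_ge0 => //; exact: ltW (hbs _).
Qed.

Lemma lin_ge0 f x : (forall i a, 0 <= f i a) -> nonneg_mx x -> 0 <= lin f x.
Proof.
move=> hf hx; apply: sumr_ge0 => i _; apply: sumr_ge0 => a _.
exact: mulr_ge0.
Qed.

Lemma ln_le_sub1 (s : R) : 0 < s -> ln s <= s - 1.
Proof.
move=> s0; have := expR_ge1Dx (ln s); rewrite lnK ?posrE //; lra.
Qed.

End Helpers.

Theorem proposition4 (R : realType) (L : nat) (m : model R L)
    (xA : 'I_L -> 'I_L -> R) (wA : 'I_L -> R)
    (xC : 'I_L -> 'I_L -> R) (wC : 'I_L -> R) :
  model_ok m ->
  mixed_equilibrium m xA wA xC wC ->
  CV_optimal m (inflow xC) xC /\ capacity_multipliers m (inflow xC) xC wC.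
Proof.
move=> hm [[_ hxC _ hwC [_ _ fbC _ TC]] hii _].
have N0 : 0 < N m by case: hm => _ [_ [_ [_ [_ [_ [_ []]]]]]].
pose T := lin (tauw m wC).
pose S := \sum_(i < L) wC i * inflow xC i.
have key : forall y, nonneg_mx y -> flow_balance m y -> 0 < lin (rC m) y ->
    0 < lin (rC m) xC /\
    N m * ln (lin (rC m) y) - T y <= N m * ln (lin (rC m) xC) - N m.
  move=> y hy fby ry.
  have T0 : 0 <= T y by apply: lin_ge0 => //; exact: tauw_ge0.
  have [Tz|Tp] := eqVneq (T y) 0.
    exfalso.
    have hz : nonneg_mx (fun i j => xC i j + y i j).
      by move=> i j; apply: addr_ge0.
    have TN : lin (tauw m wC) (fun i j => xC i j + y i j) = N m.
      by rewrite lin_add TC -/T Tz addr0.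
    have := hii _ hz (@fb_add _ _ m _ _ fbC fby) TN.
    rewrite lin_add; lra.
  have Tpos : 0 < T y by rewrite lt0r Tp.
  set k := N m / T y.
  have k0 : 0 < k by apply: divr_gt0.
  have hz : nonneg_mx (fun i j => k * y i j).
    by move=> i j; apply: mulr_ge0 => //; apply: ltW.
  have kT : lin (tauw m wC) (fun i j => k * y i j) = N m.
    by rewrite lin_scale -/T /k mulrVK // unitfE.
  have hle := hii _ hz (@fb_scale _ _ m _ k fby) kT.
  rewrite lin_scale in hle.
  have ky0 : 0 < k * lin (rC m) y by apply: mulr_gt0.
  have rx0 : 0 < lin (rC m) xC by apply: lt_le_trans hle.
  split => //.
  have l1 : ln (k * lin (rC m) y) <= ln (lin (rC m) xC) by rewrite ler_ln ?posrE.
  rewrite lnM ?posrE // in l1.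
  have lk : ln k = - ln (T y / N m).
    by rewrite -lnV ?posrE ?divr_gt0 // invf_div.
  have ls := @ln_le_sub1 _ _ (divr_gt0 Tpos N0).
  have e : N m * (T y / N m - 1) = T y - N m.
    by rewrite mulrBr mulr1 mulrCA divff ?mulr1 // gt_eqF.
  have : N m * ln (T y / N m) <= T y - N m.
    by rewrite -e ler_wpM2l // ltW.
  rewrite lk in l1.
  have := ler_wpM2l (ltW N0) l1.
  rewrite mulrDr mulrN.
  lra.
have lag : forall y, nonneg_mx y -> flow_balance m y ->
    (CV_lagrangian m (inflow xC) wC y <= CV_lagrangian m (inflow xC) wC xC)%E.
  move=> y hy fby.
  rewrite /CV_lagrangian /CV_obj.
  case: ifP => ry; last by rewrite addNye leNye.
  have [rx hk] := key y hy fby ry.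
  rewrite rx -!EFinD lee_fin.
  have ey : T y = lin (tau_dr m) y + \sum_(i < L) wC i * inflow y i by rewrite /T lin_tauw.
  have ex : N m = lin (tau_dr m) xC + S by rewrite -TC /T lin_tauw.
  have ez : \sum_(i < L) wC i * (inflow xC i - inflow xC i) = 0.
    by apply: big1 => i _; rewrite subrr mulr0.
  have es : \sum_(i < L) wC i * (inflow xC i - inflow y i) =
            S - \sum_(i < L) wC i * inflow y i.
    by rewrite /S -sumrB; apply: eq_bigr => i _; rewrite mulrBr.
  rewrite ez es; lra.
split.
  split; first by split => //; split.
  move=> y [hy [fby hin]].
  have := lag y hy fby.
  rewrite /CV_lagrangian /CV_obj.
  case: ifP => ry; last by move=> _; exact: leNye.
  have [rx _] := key y hy fby ry.
  rewrite rx -!EFinD !lee_fin.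
  have ez : \sum_(i < L) wC i * (inflow xC i - inflow xC i) = 0.
    by apply: big1 => i _; rewrite subrr mulr0.
  have s0 : 0 <= \sum_(i < L) wC i * (inflow xC i - inflow y i).
    apply: sumr_ge0 => i _; apply: mulr_ge0 => //; rewrite subr_ge0; exact: hin.
  rewrite ez; lra.
split => //; split => // i; by rewrite subrr mulr0.
Qed.
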